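(* Let $c_1,c_2$ be positive constants and $h:=4(2\sqrt2 c_1+c_2^2)$. Then there exists a constant $\gamma_1>0$ such that, for all sufficiently large $n$, for every $(2n,d,b)$-clustered regular graph $G=(V,E)$, if each node $u\in V$ chooses a color in $\{red,blue\}$ uniformly at random and independently of the others, then $$\Pr\big[s^{(0)}_1\ge h\sqrt n \ \wedge\ -s^{(0)}_2\ge h\sqrt n\big]\ge\gamma_1.$$
   Context: A $(2n,d,b)$-clustered regular graph is a graph $G=(V,E)$ with $V=V_1\cup V_2$ disjoint, $|V_1|=|V_2|=n$, every node of degree $d$, every node of $V_1$ having exactly $b$ neighbors in $V_2$ and vice versa. For $i\in\{1,2\}$, $s^{(0)}_i$ denotes the number of red nodes in $V_i$ minus the number of blue nodes in $V_i$ in the initial coloring. *)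

(* Defs.v *)
From mathcomp Require Import all_boot all_order all_algebra.
From mathcomp Require Import reals.
Set Implicit Arguments. Unset Strict Implicit. Unset Printing Implicit Defensive.
Import Order.TTheory GRing.Theory Num.Theory.
Local Open Scope ring_scope.

Definition clustered_regular (V : finType) (e : rel V) (V1 : {set V})
  (n d b : nat) : Prop :=
  [/\ symmetric e /\ irreflexive e,
      #|V1| = n /\ #|~: V1| = n,
      (forall u : V, #|[set v | e u v]| = d),
      (forall u : V, u \in V1 -> #|[set v in ~: V1 | e u v]| = b) &
      (forall u : V, u \notin V1 -> #|[set v in V1 | e u v]| = b)].

(* A coloring: true = red, false = blue. *)
Definition coloring (V : finType) := {ffun V -> bool}.

Definition spread (V : finType) (col : coloring V) (A : {set V}) : int :=
  (#|[set v in A | col v]|%:Z - #|[set v in A | ~~ col v]|%:Z)%R.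

(* Probability of an event when every node picks its colour uniformly and
   independently, i.e. the uniform distribution on all colorings. *)
Definition unif_prob (R : realType) (V : finType) (P : pred (coloring V)) : R :=
  (#|[set c : coloring V | P c]|%:R / #|{: coloring V}|%:R)%R.

(* Main.v *)
Require Import Defs.
From Stdlib Require PeanoNat.
From mathcomp Require Import all_boot all_order all_algebra reals.
From mathcomp Require Import zify ring lra.
Set Implicit Arguments. Unset Strict Implicit. Unset Printing Implicit Defensive.

Lemma binY m : 'C(m.*2.+2, m.+1) * m.+1 = 2 * m.*2.+1 * 'C(m.*2, m).
Proof.
have h1 := mul_bin_diag m.*2.+2 m.
have h2 := mul_bin_diag m.*2.+1 m.
have h3 : 'C(m.*2.+1, m.+1) = 'C(m.*2.+1, m).
  rewrite -(bin_sub (n:=m.*2.+1) (m:=m)); last lia.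
  congr binomial; lia.
simpl in h1, h2. rewrite h3 in h2. lia.
Qed.

Lemma cbin_even m : 0 < m -> 16 ^ m <= 'C(m.*2, m) ^ 2 * (4 * m).
Proof.
elim: m => [//|m IH] _.
case: m IH => [|m] IH; first by [].
have := IH isT. set X := 'C(_, m.+1) => {}IH.
have E := binY m.+1. rewrite -/X in E. set Y := 'C(_, _) in E *.
rewrite expnS.
rewrite -(@leq_pmul2r (m.+1 * m.+2)) //.
have -> : Y ^ 2 * (4 * m.+2) * (m.+1 * m.+2) = (Y * m.+2)^2 * (4 * m.+1) by ring.
rewrite E.
have -> : (2 * (m.+1).*2.+1 * X) ^ 2 * (4 * m.+1) = (4 * ((m.+1).*2.+1)^2) * (X ^ 2 * (4 * m.+1)) by ring.
apply: (leq_trans _ (leq_mul (leqnn _) IH)).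
nia.
Qed.

Lemma cbin n : 0 < n -> 4 ^ n <= 'C(n, n - n./2) ^ 2 * (8 * n).
Proof.
move=> n0; have E := odd_double_half n.
set m := n./2 in E *.
case: (odd n) E => /= E.
- have -> : n - m = m.+1 by lia.
  rewrite -E.
  case: (posnP m) => [->|m0]; first by [].
  have := cbin_even m0.
  have le : 'C(m.*2, m) <= 'C(m.*2.+1, m.+1) by rewrite binS; lia.
  have -> : 4 ^ (1 + m.*2) = 4 * 16 ^ m by rewrite expnD -mul2n expnM.
  move=> H. apply: (leq_trans (leq_mul (leqnn 4) H)).
  have L := leq_mul le le. have := leq_mul L (leqnn (16 * m)). rewrite ?add1n !expnS !expn0 !muln1. nia.
- have -> : n - m = m by lia.
  have m0 : 0 < m by lia.
  have := cbin_even m0. rewrite -E.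
  have -> : 4 ^ (0 + m.*2) = 16 ^ m by rewrite -mul2n expnM.
  move=> H; apply: (leq_trans H). apply: leq_mul => //; lia.
Qed.
Lemma card_range (T : finType) (B : {set T}) a r :
  #|[set A : {set T} | (A \subset B) && (a <= #|A| < a + r)]| =
  \sum_(a <= k < a + r) 'C(#|B|, k).
Proof.
elim: r => [|r IH].
  rewrite addn0 big_geq //; apply: eq_card0 => A; rewrite !inE; case: (A \subset B) => /=; lia.
rewrite addnS big_nat_recr /=; last lia.
rewrite -IH -cards_draws.
have -> : [set A : {set T} | (A \subset B) && (a <= #|A| < (a + r).+1)] =
   [set A : {set T} | (A \subset B) && (#|A| == a + r)] :|:
   [set A : {set T} | (A \subset B) && (a <= #|A| < a + r)].
  apply/setP => A; rewrite !inE. case: (A \subset B) => //=. lia.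
rewrite cardsU.
have -> : [set A : {set T} | (A \subset B) && (#|A| == a + r)] :&:
   [set A : {set T} | (A \subset B) && (a <= #|A| < a + r)] = set0.
  apply/setP => A; rewrite !inE. case: (A \subset B) => //=. lia.
by rewrite cards0 subn0 addnC.
Qed.
Lemma N1 H r n c0 : 4 * (8 * H + 12) <= r -> r * r <= n -> 2 * c0 <= n.+1 ->
  c0 + (H * r.+1 + r) <= n.
Proof. nia. Qed.

Lemma N2 H r n c0 i : 4 * (8 * H + 12) <= r -> r * r <= n -> n <= 2 * c0 -> 2 * c0 <= n.+1 ->
  c0 <= i < c0 + (H * r.+1 + r) -> r * (i.+1) <= r * (n - i) + (8 * H + 12) * i.+1.
Proof.
move=> hr hn1 hc1 hc2 /andP [h1 h2]. have hN := N1 hr hn1 hc2.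
have e1 : 2 * i.+1 >= r * r by lia.
have e2 : (8 * H + 12) * r >= 4 * (H * r.+1 + r) by nia.
have e3 : (8 * H + 12) * (2 * i.+1) >= 4 * r * (H * r.+1 + r).
  have := leq_mul (leqnn (8 * H + 12)) e1. nia.
nia.
Qed.

Lemma N3 H r : 4 * (8 * H + 12) <= r ->
  H * r.+1 + r <= r %/ (2 * (8 * H + 12)) * (8 * (8 * H + 12) * H.+1).
Proof.
move=> hr.
have h2 := divn_eq r (2 * (8 * H + 12)).
have h1 := @ltn_pmod r (2 * (8 * H + 12)) ltac:(lia).
set q := r %/ _ in h2 *. set m := r %% _ in h1 h2.
have : 4 * (8 * H + 12) * q >= r by nia.
nia.
Qed.

Lemma N4 H r : r %/ (2 * (8 * H + 12)) * (8 * H + 12) * 2 <= r.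
Proof.
have h2 := divn_eq r (2 * (8 * H + 12)).
set q := r %/ _ in h2 *. set m := r %% _ in h2. nia.
Qed.
Import Order.TTheory GRing.Theory Num.Theory.
Local Open Scope ring_scope.
Lemma bern (R : realFieldType) (z : R) s : 0 <= z <= 1 -> 1 - s%:R * z <= (1 - z) ^+ s.
Proof.
move=> /andP [z0 z1]; elim: s => [|s IH]; first by rewrite expr0 mul0r subr0.
rewrite exprS.
have h0 : 0 <= 1 - z by lra.
have : (1 - z) * (1 - s%:R * z) <= (1 - z) * (1 - z) ^+ s by apply: ler_wpM2l.
apply: le_trans. rewrite -natr1.
have : 0 <= s%:R * z * z :> R by apply: mulr_ge0 => //; apply: mulr_ge0.
nra.
Qed.

Lemma blk (R : realFieldType) (z : R) s Q : 0 <= z <= 1 -> s%:R * z <= 1/2 ->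
  (1/2) ^+ Q <= (1 - z) ^+ (s * Q).
Proof.
move=> hz hs; rewrite exprM; apply: lerXn2r.
- by rewrite nnegrE; lra.
- by rewrite nnegrE; apply: exprn_ge0; move/andP: hz => [? ?]; lra.
- by apply: le_trans (bern s hz); lra.
Qed.

Lemma ratio (R : realFieldType) (y : R) n c0 J : 0 <= y ->
  (forall i, (c0 <= i < c0 + J)%N -> y * (i.+1)%:R <= (n - i)%:R) ->
  forall t, (t <= J)%N -> 'C(n, c0)%:R * y ^+ t <= 'C(n, c0 + t)%:R :> R.
Proof.
move=> y0 hy; elim=> [|t IH] ht; first by rewrite expr0 mulr1 addn0.
have h1 := IH (ltnW ht).
have h2 := hy (c0 + t)%N ltac:(lia).
have e := mul_bin_left n (c0 + t).
have e' : (c0 + t).+1%:R * 'C(n, (c0 + t).+1)%:R = (n - (c0 + t))%:R * 'C(n, c0 + t)%:R :> R.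
  by rewrite -!natrM e.
rewrite addnS.
have p : 0 < (c0 + t).+1%:R :> R by rewrite ltr0n.
rewrite -(ler_pM2l p) e' exprS.
have c0p : 0 <= 'C(n, c0)%:R :> R by [].
have : 0 <= 'C(n, c0)%:R * y ^+ t :> R by apply: mulr_ge0 => //; apply: exprn_ge0.
move=> hh.
have := ler_wpM2r hh h2.
have := ler_wpM2l (ler0n R (n - (c0 + t))) h1.
nra.
Qed.

Lemma N5 n r : (0 < r)%N -> (n < r.+1 * r.+1)%N -> (0 < n)%N ->
  (2 ^ n <= 'C(n, n - n./2) * (6 * r))%N.
Proof.
move=> r0 hn n0; have h := cbin n0.
set C := 'C(n, _) in h *.
rewrite leqNgt; apply/negP => lt.
have := ltn_mul lt lt. rewrite -expnMn. have -> : (2 * 2 = 4)%N by [].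
have : (8 * n <= 32 * (r * r))%N by nia.
move=> e; have := leq_mul (leqnn (C ^ 2)) e. rewrite !expnS expn0 in h *. nia.
Qed.

Lemma tail (R : realFieldType) (H : nat) : exists2 g : R, 0 < g &
  forall n r, (4 * (8 * H + 12) <= r)%N -> (r * r <= n)%N -> (n < r.+1 * r.+1)%N ->
  g * 2 ^+ n <= (\sum_(n - n./2 + H * r.+1 <= k < n - n./2 + H * r.+1 + r) 'C(n, k))%:R.
Proof.
set A := (8 * H + 12)%N. set Q := (8 * A * H.+1)%N.
exists ((1/2) ^+ Q / 6).
  by apply: divr_gt0 => //; apply: exprn_gt0; lra.
move=> n r hr hn1 hn2.
have r0 : (0 < r)%N by rewrite /A in hr; lia.
have n0 : (0 < n)%N by nia.
set c0 := (n - n./2)%N.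
have hcc := odd_double_half n.
have hc1 : (n <= 2 * c0)%N by rewrite /c0; lia.
have hc2 : (2 * c0 <= n.+1)%N by rewrite /c0; lia.
set J := (H * r.+1 + r)%N.
have rR : 0 < r%:R :> R by rewrite ltr0n.
set z : R := A%:R / r%:R.
have z0 : 0 <= z by apply: divr_ge0.
have z1 : z <= 1.
  rewrite /z ler_pdivrMr // mul1r ler_nat. rewrite /A in hr *; lia.
set y : R := 1 - z.
have y0 : 0 <= y by rewrite /y; lra.
have y1 : y <= 1 by rewrite /y; lra.
have hy : forall i, (c0 <= i < c0 + J)%N -> y * (i.+1)%:R <= (n - i)%:R.
  move=> i hi. have := N2 hr hn1 hc1 hc2 hi.
  rewrite -(ler_nat R) !natrD !natrM -/A => e.
  have hin : (i < n)%N by have := N1 hr hn1 hc2; move: hi; rewrite /J; lia.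
  set u : R := (i.+1)%:R in e *. set v : R := (n - i)%:R in e *.
  have wr : z * u * r%:R = A%:R * u.
    by rewrite /z mulrAC divfK // gt_eqF.
  rewrite /y mulrBl mul1r. nra.
have hJ : (1/2) ^+ Q <= y ^+ J.
  apply: le_trans (_ : y ^+ (r %/ (2 * A) * Q) <= y ^+ J).
    apply: blk; first by apply/andP.
    have := N4 H r. rewrite -/A -(ler_nat R) !natrM => e.
    rewrite /z mulrA ler_pdivrMr // -[r%:R](mulr1) -mulrA mulrCA.
    set s : R := (r %/ (2 * A))%:R in e *. lra.
  apply: ler_wiXn2l => //. exact: N3.
rewrite natr_sum.
apply: le_trans (_ : \sum_(n - n./2 + H * r.+1 <= k < n - n./2 + H * r.+1 + r)
                     ('C(n, c0)%:R * (1/2) ^+ Q) <= _).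
  rewrite sumr_const_nat.
  have -> : (n - n./2 + H * r.+1 + r - (n - n./2 + H * r.+1))%N = r by lia.
  have h5 := N5 r0 hn2 n0. rewrite -(ler_nat R) natrM natrX -/c0 in h5.
  have hq : 0 <= (1/2 : R) ^+ Q by apply: exprn_ge0; lra.
  set C : R := 'C(n, c0)%:R in h5 *.
  set q : R := (1/2) ^+ Q in hq *. set P : R := 2 ^+ n in h5 *.
  rewrite -[C * q *+ r]mulr_natr.
  have := ler_wpM2r hq h5.
  have -> : C * (6 * r)%:R * q = 6 * (C * q * r%:R) by rewrite natrM; ring.
  have -> : q / 6 * P = (P * q) / 6 by ring.
  lra.
apply: ler_sum_nat => k hk.
have hk' : (c0 + (k - c0) = k)%N by rewrite /c0; lia.
have hkJ : (k - c0 <= J)%N by rewrite /J /c0; lia.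
have := ratio y0 hy hkJ. rewrite hk' => e.
apply: le_trans e. apply: ler_wpM2l => //.
apply: le_trans hJ _. exact: ler_wiXn2l.
Qed.

Theorem lemma1 (R : realType) (c1 c2 : R) :
  0 < c1 -> 0 < c2 ->
  let h : R := 4 * (2 * Num.sqrt 2 * c1 + c2 ^+ 2) in
  exists gamma1 : R, 0 < gamma1 /\
    exists N : nat, forall n : nat, (N <= n)%N ->
      forall (V : finType) (e : rel V) (V1 : {set V}) (d b : nat),
        clustered_regular e V1 n d b ->
        gamma1 <= unif_prob R (fun col : coloring V =>
                   (h * Num.sqrt (n%:R) <= (spread col V1)%:~R) &&
                   (h * Num.sqrt (n%:R) <= - (spread col (~: V1))%:~R)).
Proof.
move=> c10 c20 h.
have h0 : 0 <= h.
  rewrite /h; apply: mulr_ge0 => //; apply: addr_ge0; last exact: exprn_ge0 (ltW c20).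
  apply: mulr_ge0 (ltW c10); apply: mulr_ge0 => //; exact: sqrtr_ge0.
set H := Num.Def.archi_bound h.
have hH : h <= H%:R by apply: ltW; apply: archi_boundP.
have [g g0 hg] := tail R H.
exists (g ^+ 2); split; first exact: exprn_gt0.
set A := (8 * H + 12)%N.
exists ((4 * A).+1 * (4 * A).+1)%N => n hN V e V1 d b [_ [cV1 cV2] _ _ _].
set r := PeanoNat.Nat.sqrt n.
have [sq1 sq2] := PeanoNat.Nat.sqrt_spec n (PeanoNat.Nat.le_0_l n).
have hn1 : (r * r <= n)%N by lia.
have hn2 : (n < r.+1 * r.+1)%N by lia.
have hr : (4 * A <= r)%N by nia.
have := hg n r hr hn1 hn2.
rewrite -/A.
set a := (n - n./2 + H * r.+1)%N.
set P1 := [set A0 : {set V} | (A0 \subset V1) && (a <= #|A0| < a + r)%N].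
have eP1 : (\sum_(a <= k < a + r) 'C(n, k))%N = #|P1| by rewrite /P1 card_range cV1.
rewrite eP1.
set P2 := [set A0 : {set V} | (A0 \subset ~: V1) && (a <= #|A0| < a + r)%N].
have cP2 : #|P2| = #|P1| by rewrite /P2 card_range /P1 card_range cV1 cV2.
set f := fun p : {set V} * {set V} =>
  [ffun v => if v \in V1 then v \in p.1 else v \notin p.2] : coloring V.
set E := [set c : coloring V | (h * Num.sqrt (n%:R) <= (spread c V1)%:~R) &&
                   (h * Num.sqrt (n%:R) <= - (spread c (~: V1))%:~R)].
have finj : {in setX P1 P2 &, injective f}.
  move=> [A1 B1] [A2 B2]; rewrite !inE /= => /andP [hA1 hB1] /andP [hA2 hB2] ef.
  move/andP: hA1 => [sA1 _]; move/andP: hA2 => [sA2 _].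
  move/andP: hB1 => [sB1 _]; move/andP: hB2 => [sB2 _].
  have ev v := congr1 (fun c : coloring V => c v) ef.
  congr pair; apply/setP => v; have := ev v; rewrite /= !ffunE.
  - case: (boolP (v \in V1)) => // nv _.
    apply/idP/idP => hv; [by have := subsetP sA1 v hv; rewrite (negPf nv)
                         |by have := subsetP sA2 v hv; rewrite (negPf nv)].
  - case: (boolP (v \in V1)) => [iv _|_]; last by move/negb_inj.
    apply/idP/idP => hv; [by have := subsetP sB1 v hv; rewrite inE iv
                         |by have := subsetP sB2 v hv; rewrite inE iv].
have sqn : Num.sqrt (n%:R) <= r.+1%:R :> R.
  rewrite -[X in _ <= X]ger0_norm // -sqrtr_sqr ler_sqrt ?exprn_ge0 //.
  by rewrite -natrX ler_nat; lia.
have hsq : h * Num.sqrt (n%:R) <= (H * r.+1)%:R.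
  rewrite natrM; apply: ler_pM => //; exact: sqrtr_ge0.
have sub : f @: setX P1 P2 \subset E.
  apply/subsetP => c /imsetP [[A1 B1]]; rewrite !inE /= => /andP [hA hB] ->.
  move/andP: hA => [sA hA]; move/andP: hB => [sB hB].
  have odh := odd_double_half n.
  rewrite /spread.
  have e1 : [set v in V1 | f (A1, B1) v] = V1 :&: A1.
    by apply/setP => v; rewrite !inE /f ffunE /=; case: (v \in V1) => /=; rewrite ?andbT ?andbF ?negbK.
  have e2 : [set v in V1 | ~~ f (A1, B1) v] = V1 :\: A1.
    by apply/setP => v; rewrite !inE /f ffunE /=; case: (v \in V1) => /=; rewrite ?andbT ?andbF ?negbK.
  have e3 : [set v in ~: V1 | f (A1, B1) v] = ~: V1 :\: B1.
    by apply/setP => v; rewrite !inE /f ffunE /=; case: (v \in V1) => /=; rewrite ?andbT ?andbF ?negbK.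
  have e4 : [set v in ~: V1 | ~~ f (A1, B1) v] = ~: V1 :&: B1.
    by apply/setP => v; rewrite !inE /f ffunE /=; case: (v \in V1) => /=; rewrite ?andbT ?andbF ?negbK.
  rewrite e1 e2 e3 e4.
  have c1' := cardsID A1 V1. have c2' := cardsID B1 (~: V1).
  rewrite (setIidPr sA) in c1' *. rewrite (setIidPr sB) in c2' *.
  rewrite rmorphB rmorphB /= opprB.
  have k1 : (H * r.+1 + #|V1 :\: A1| <= #|A1|)%N by rewrite /a in hA; lia.
  have k2 : (H * r.+1 + #|~: V1 :\: B1| <= #|B1|)%N by rewrite /a in hB; lia.
  rewrite -(ler_nat R) natrD in k1. rewrite -(ler_nat R) natrD in k2.
  apply/andP; split.
  - apply: (le_trans hsq). change (((H * r.+1)%:R : R) <= #|A1|%:R - #|V1 :\: A1|%:R). lra.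
  - apply: (le_trans hsq). change (((H * r.+1)%:R : R) <= #|B1|%:R - #|~: V1 :\: B1|%:R). lra.
have cE : (#|P1| * #|P2| <= #|E|)%N.
  rewrite -cardsX -(card_in_imset finj); exact: subset_leq_card.
rewrite /unif_prob.
have -> : #|[set c : coloring V | (h * Num.sqrt (n%:R) <= (spread c V1)%:~R) &&
                   (h * Num.sqrt (n%:R) <= - (spread c (~: V1))%:~R)]| = #|E| by [].
have cT : #|{: coloring V}| = (2 ^ n * 2 ^ n)%N.
  rewrite /coloring card_ffun card_bool -expnD -(cardsC V1) cV1 cV2 //.
rewrite cT natrM natrX.
have p2 : 0 < (2 : R) ^+ n by apply: exprn_gt0.
rewrite ler_pdivlMr; last by apply: mulr_gt0.
rewrite -(ler_nat R) natrM cP2 in cE.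
move=> hP.
apply: le_trans cE.
have hP0 : 0 <= g * 2 ^+ n by apply: mulr_ge0 (ltW g0) (ltW p2).
have := ler_pM hP0 hP0 hP hP.
have -> : g ^+ 2 * (2 ^+ n * 2 ^+ n) = (g * 2 ^+ n) * (g * 2 ^+ n) :> R by ring. done.
Qed.
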